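(* Let $P$ be a query problem (with inputs of a fixed size $n$), let $D(P)$ be its deterministic query complexity and, for each integer $k\ge 0$, let $D_k(P)$ be its $k$-change query complexity, as defined in the context. Then: (i) $D_k(P)\le D(P)$ for every $k\ge 0$; (ii) for every $k\ge 0$, $$D_k(P)\le \min\Big\{\sum_{i=1}^{l} D_{j_i}(P)\;:\; l\ge 1,\ j_1,\dots,j_l\ge 0 \text{ integers},\ \sum_{i=1}^{l}(j_i+1)>k\Big\}.$$
   Context: A query problem $P$ consists of a finite set $X$ of inputs, a function $f:X\to Y$, and a set of allowed queries; each query $q$ has an answer $q(x)$ for each input $x\in X$. The goal is to determine $f(x)$ for an unknown input $x$. The deterministic query complexity $D(P)$ is the minimum, over all adaptive querying strategies (decision trees), of the maximum over inputs of the number of queries asked before the answers received determine $f$ (i.e. all inputs consistent with all answers so far have the same $f$-value). The $k$-change complexity $D_k(P)$ is defined by the following game between a Questioner and an Adversary. The Adversary chooses an input $x\in X$ (the current input). The Questioner, who always knows the current input, asks queries one after another; each query is answered according to the current input. Between queries the Adversary may replace the current input by any other input consistent with all answers given so far, but he may do so at most $k$ times in total. The game ends as soon as the answers given determine the value of $f$. $D_k(P)$ is the number of queries asked when the Questioner plays to minimize and the Adversary plays to maximize the number of queries. (In particular $D_0(P)$ is the non-deterministic/certificate complexity.) *)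

(* Defs.v *)
From mathcomp Require Import all_boot.
Set Implicit Arguments. Unset Strict Implicit. Unset Printing Implicit Defensive.

(* A query problem: finite input type X, function f : X -> Y, a type Q of
   allowed queries, and answers  ans q x : A  of query q on input x. *)
Section QueryProblem.
Variables (X : finType) (Y : eqType) (Q : Type) (A : eqType).
Variables (f : X -> Y) (ans : Q -> X -> A).

(* The answers received so far are summarised by the set S of inputs
   consistent with them; they determine f iff f is constant on S. *)
Definition determined (S : {set X}) : Prop :=
  forall y z, y \in S -> z \in S -> f y = f z.

Definition refine (S : {set X}) (q : Q) (x : X) : {set X} :=
  [set y in S | ans q y == ans q x].

Inductive dtree : Type :=
| Leaf : dtree
| Node : Q -> (A -> dtree) -> dtree.

Fixpoint solves (t : dtree) (m : nat) (S : {set X}) : Prop :=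
  determined S \/
  match t, m with
  | Node q br, m'.+1 =>
      forall x, x \in S -> solves (br (ans q x)) m' (refine S q x)
  | _, _ => False
  end.

Definition D_le (m : nat) : Prop := exists t : dtree, solves t m setT.

(* k-change game.  [qwins m S x c]: the Questioner can force the game to end
   within m further queries, when S is the set of inputs consistent with the
   answers so far, x the current input (just chosen/kept by the Adversary,
   known to the Questioner) and c the number of changes the Adversary has
   left.  After the answer to q the Adversary may keep x or replace it by a
   different consistent input (using one change). *)
Fixpoint qwins (m : nat) (S : {set X}) (x : X) (c : nat) : Prop :=
  determined S \/
  match m with
  | 0 => False
  | m'.+1 =>
      exists q : Q,
        forall x', x' \in refine S q x -> (x' = x \/ 0 < c) ->
          qwins m' (refine S q x) x' (if x' == x then c else c.-1)
  end.

Definition Dk_le (k m : nat) : Prop := forall x : X, qwins m setT x k.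

End QueryProblem.

(* Main.v *)
Require Import Defs.
From mathcomp Require Import all_boot.

Section Aux.
Variables (X : finType) (Y : eqType) (Q : Type) (A : eqType).
Variables (f : X -> Y) (ans : Q -> X -> A).

Lemma refineS (S S' : {set X}) q x : S' \subset S ->
  refine ans S' q x \subset refine ans S q x.
Proof.
move=> sub; apply/subsetP => y; rewrite !inE => /andP[yS ->].
by rewrite (subsetP sub _ yS).
Qed.

Lemma detS (S S' : {set X}) : S' \subset S -> determined f S -> determined f S'.
Proof. by move=> sub d y z yS zS; apply: d; apply: (subsetP sub). Qed.

Lemma qmono m : forall m' (S S' : {set X}) x c c', qwins f ans m S x c -> m <= m' -> c' <= c ->
  S' \subset S -> qwins f ans m' S' x c'.
Proof.
elim: m => [|n IH] m' S S' x c c' /=.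
  by case=> // d _ _ sub; case: m' => [|m'] /=; left; exact: detS d.
case=> [d _ _ sub|[q Hq] lm lc sub].
  by case: m' => [|m'] /=; left; exact: detS d.
case: m' lm => [//|n'] lm /=; right; exists q => x' x'in hc.
have x'in2 : x' \in refine ans S q x.
  move: x'in; apply/subsetP; exact: refineS.
have hc2 : x' = x \/ 0 < c.
  case: hc => [->|h]; [by left| right; exact: leq_trans h lc].
apply: (IH _ _ _ _ _ _ (Hq x' x'in2 hc2)) => //.
  by case: (x' == x) => //; rewrite -!subn1 leq_sub2r.
exact: refineS.
Qed.

Lemma solves_qwins t : forall m S, solves f ans t m S -> forall x c, qwins f ans m S x c.
Proof.
elim: t => [|q br IH] m S /=.
  by case=> [d|]; [move=> x c; case: m => *; left| case: m].
case=> [d x c|]; first by case: m => *; left.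
case: m => [//|m] H x c /=; right; exists q => x' x'in _.
have -> : refine ans S q x = refine ans S q x'.
  move: x'in; rewrite inE => /andP[_ /eqP e].
  by apply/setP => y; rewrite !inE e.
apply: IH; apply: H.
by move: x'in; rewrite inE => /andP[].
Qed.

Lemma comb m1 : forall m2 (S : {set X}) x c1 c2, qwins f ans m1 S x c1 ->
  (forall S' y, qwins f ans m2 S' y c2) -> qwins f ans (m1 + m2) S x (c1 + c2.+1).
Proof.
elim: m1 => [|n IH] m2 S x c1 c2 /=.
  by case=> // d _; case: m2 => *; left.
case=> [d _|[q Hq] H2]; first by left.
right; exists q => x' x'in hc.
case: eqP => [e|ne].
  subst x'; apply: IH => //.
  by have := Hq x x'in (or_introl erefl); rewrite eqxx.
case: c1 Hq hc => [|c1] Hq hc.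
  rewrite add0n /=; apply: (qmono _ _ _ _ _ _ _ (H2 (refine ans S q x) x')) => //.
  exact: leq_addl.
have := Hq x' x'in (or_intror erefl).
case: eqP => // _ /= h.
exact: IH.
Qed.

End Aux.

Theorem proposition1 (X : finType) (Y : eqType) (Q : Type) (A : eqType)
    (f : X -> Y) (ans : Q -> X -> A) :
  (* (i)  D_k(P) <= D(P) *)
  (forall k m : nat, D_le f ans m -> Dk_le f ans k m) /\
  (* (ii) D_k(P) <= sum_i D_{j_i}(P) whenever l >= 1 and sum_i (j_i+1) > k;
     the list js stores pairs (j_i, m_i) with D_{j_i}(P) <= m_i *)
  (forall (k : nat) (js : seq (nat * nat)),
      js != [::] ->
      k < \sum_(p <- js) p.1.+1 ->
      (forall p, p \in js -> Dk_le f ans p.1 p.2) ->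
      Dk_le f ans k (\sum_(p <- js) p.2)).
Proof.
split.
  move=> k m [t Ht] x; eapply solves_qwins; exact: Ht.
move=> k js; elim: js k => [//|p js IH] k _.
rewrite !big_cons => hk H x.
have Hp := H p (mem_head _ _).
case: (leqP k p.1) => kp.
  eapply qmono; [exact: (Hp x)|exact: leq_addr|exact: kp|exact: subxx].
have js0 : js != [::].
  apply/eqP => e; move: hk kp; rewrite e big_nil addn0 ltnS => a b.
  by rewrite leqNgt b in a.
have [k' ek] : exists k', k = p.1 + k'.+1.
  by exists (k - p.1).-1; rewrite prednK ?subn_gt0 // subnKC // ltnW.
rewrite ek; apply: comb; first exact: Hp.
move=> S' y; eapply qmono; [apply: (IH k' js0 _ _ y)|exact: leqnn|exact: leqnn|exact: subsetT].
- by move: hk; rewrite ek addnS addSn ltnS ltn_add2l.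
- by move=> q qin; apply: H; rewrite in_cons qin orbT.
Qed.
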